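(* For all integers $s,t \ge 3$, every doubly saturated $R(s,t)$-good graph has at least $2s+2t-7$ vertices. Equivalently, $\mathsf{DS}(s,t) \ge 2s+2t-7$, where $\mathsf{DS}(s,t) := \inf\{n \mid \text{there is a doubly saturated } R(s,t)\text{-good graph on } n \text{ vertices}\}$ (with $\inf \emptyset = \infty$).
   Context: All graphs are finite and simple. A graph $G$ is \emph{$R(s,t)$-good} if it contains no clique of size $s$ and no independent set of size $t$. A graph $G$ is \emph{doubly saturated $R(s,t)$-good} if (i) $G$ is $R(s,t)$-good; (ii) for every pair of non-adjacent distinct vertices $u,v$, the graph $G + uv$ is not $R(s,t)$-good; (iii) for every edge $uv$ of $G$, the graph $G - uv$ is not $R(s,t)$-good; and (iv) $G$ is neither a complete graph nor an edgeless graph. *)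

(* Defs.v *)
From mathcomp Require Import all_boot.
Set Implicit Arguments. Unset Strict Implicit. Unset Printing Implicit Defensive.

Definition simple_graph (T : finType) (e : rel T) : Prop :=
  symmetric e /\ irreflexive e.

Definition is_clique (T : finType) (e : rel T) (A : {set T}) : bool :=
  [forall x in A, forall y in A, (x != y) ==> e x y].

Definition is_indep (T : finType) (e : rel T) (A : {set T}) : bool :=
  [forall x in A, forall y in A, ~~ e x y].

Definition rgood (T : finType) (e : rel T) (s t : nat) : Prop :=
  (forall A : {set T}, #|A| = s -> ~~ is_clique e A) /\
  (forall A : {set T}, #|A| = t -> ~~ is_indep e A).

Definition add_edge (T : finType) (e : rel T) (u v : T) : rel T :=
  fun x y => e x y || ((x == u) && (y == v)) || ((x == v) && (y == u)).
Definition del_edge (T : finType) (e : rel T) (u v : T) : rel T :=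
  fun x y => e x y && ~~ (((x == u) && (y == v)) || ((x == v) && (y == u))).

Definition is_complete (T : finType) (e : rel T) : Prop :=
  forall x y : T, x != y -> e x y.
Definition is_edgeless (T : finType) (e : rel T) : Prop :=
  forall x y : T, ~~ e x y.

Definition doubly_saturated (T : finType) (e : rel T) (s t : nat) : Prop :=
  [/\ rgood e s t,
      (forall u v : T, u != v -> ~~ e u v -> ~ rgood (add_edge e u v) s t),
      (forall u v : T, e u v -> ~ rgood (del_edge e u v) s t)
    & ~ is_complete e /\ ~ is_edgeless e].

(* Main.v *)
Require Import Defs.
From mathcomp Require Import all_boot.
From mathcomp Require Import zify.
From Stdlib Require Import Classical.

Set Implicit Arguments. Unset Strict Implicit.

Definition rcl (T : finType) (r : rel T) (X : {set T}) : Prop :=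
  forall x y, x \in X -> y \in X -> x != y -> r x y.

Lemma sub_card (T : finType) (n : nat) (X : {set T}) :
  n <= #|X| -> exists Y : {set T}, Y \subset X /\ #|Y| = n.
Proof.
elim: n => [|n IH] H.
  by exists set0; rewrite sub0set cards0.
have [Y [HYX HY]] := IH (ltnW H).
have : 0 < #|X :\: Y| by rewrite cardsDS //; lia.
case/card_gt0P => z; rewrite inE => /andP [zY zX].
exists (z |: Y); split.
  by rewrite subUset sub1set zX HYX.
by rewrite cardsU1 zY HY.
Qed.

Section Hajnal.
Variables (T : finType) (r : rel T) (k : nat) (W : {set T}).
Hypothesis hb : forall X : {set T}, X \subset W -> rcl r X -> #|X| <= k.

Definition good (C : {set T}) := [/\ C \subset W, rcl r C & #|C| = k].

Definition Inv (U I : {set T}) :=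
  [/\ U \subset W, I \subset U,
      (forall x y, x \in I -> y \in U -> x != y -> r x y /\ r y x)
    & 2 * k <= #|U| + #|I|].

Lemma Inv0 C : good C -> Inv C C.
Proof.
case=> CW Cr Ck; split=> //; last lia.
move=> x y xC yC xy; split; first exact: Cr.
apply: Cr => //; by rewrite eq_sym.
Qed.

Lemma InvS U I C : Inv U I -> good C -> Inv (C :|: U) (C :&: I).
Proof.
case=> UW IU Hc Hk [CW Cr Ck]; split.
- by rewrite subUset CW UW.
- by apply: subset_trans (subsetIr _ _) _; apply: subset_trans IU (subsetUr _ _).
- move=> x y; rewrite inE => /andP [xC xI]; rewrite inE => /orP [yC|yU] xy.
  + split; first exact: Cr. by apply: Cr => //; rewrite eq_sym.
  + exact: Hc.
- set X := I :|: (C :&: U).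
  have XW : X \subset W.
    by rewrite subUset (subset_trans IU UW) (subset_trans (subsetIr _ _) UW).
  have Xr : rcl r X.
    move=> x y; rewrite !inE => /orP [xI| /andP [xC xU]] /orP [yI| /andP [yC yU]] xy.
    + by apply: (Hc x y xI (subsetP IU _ yI) xy).1.
    + by apply: (Hc x y xI yU xy).1.
    + by apply: (Hc y x yI xU _).2; rewrite eq_sym.
    + exact: Cr.
  have HX := hb XW Xr.
  have E1 := cardsUI C U.
  have E2 := cardsUI I (C :&: U).
  have E3 : I :&: (C :&: U) = C :&: I.
    apply/setP => z; rewrite !inE.
    case zI: (z \in I); case zC: (z \in C) => //=.
    by rewrite (subsetP IU _ zI).
  rewrite E3 in E2. rewrite -/X in E2. lia.
Qed.

Lemma hajnal_seq (S : seq T) C0 :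
  good C0 ->
  (forall x, x \in S -> exists C, good C /\ x \notin C) ->
  exists U I, Inv U I /\ (forall x, x \in S -> x \notin I).
Proof.
move=> g0; elim: S => [|x S IH] HS.
  by exists C0, C0; split => //; exact: Inv0.
have [U [I [HI HxS]]] : exists U I, Inv U I /\ (forall y, y \in S -> y \notin I).
  apply: IH => y yS; apply: HS; by rewrite inE yS orbT.
have [C [gC xC]] := HS x (mem_head _ _).
exists (C :|: U), (C :&: I); split; first exact: InvS.
move=> y; rewrite inE => /orP [/eqP->|yS]; rewrite inE negb_and ?xC //.
by rewrite HxS ?orbT.
Qed.

Lemma hajnal C0 :
  good C0 -> (forall x, x \in W -> exists C, good C /\ x \notin C) ->
  2 * k <= #|W|.
Proof.
move=> g0 H.
have H' : forall x, x \in enum W -> exists C, good C /\ x \notin C.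
  by move=> x; rewrite mem_enum; exact: H.
have [U [I [[UW IU _ Hk] HI]]] := hajnal_seq g0 H'.
have I0 : I = set0.
  apply/setP => z; rewrite inE; apply/negbTE; apply/negP => zI.
  have zW := subsetP UW _ (subsetP IU _ zI).
  by move: (HI z); rewrite mem_enum zW zI => /(_ isT).
rewrite I0 cards0 addn0 in Hk.
exact: leq_trans Hk (subset_leq_card UW).
Qed.
End Hajnal.
Section Graph.
Variables (T : finType) (e : rel T) (s t : nat).
Hypotheses (hs : 3 <= s) (ht : 3 <= t) (sym : symmetric e) (irr : irreflexive e).
Hypothesis Hg : rgood e s t.
Hypothesis Hadd : forall u v : T, u != v -> ~~ e u v -> ~ rgood (add_edge e u v) s t.
Hypothesis Hdel : forall u v : T, e u v -> ~ rgood (del_edge e u v) s t.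

Lemma not_rgood (r : rel T) : ~ rgood r s t ->
  (exists A : {set T}, #|A| = s /\ is_clique r A) \/
  (exists A : {set T}, #|A| = t /\ is_indep r A).
Proof.
move=> H; apply: NNPP => H'; apply: H; split=> A HA; apply/negP => HA';
  apply: H'; [left|right]; by exists A.
Qed.

Lemma addE1 u v x y : x != u -> y != u -> add_edge e u v x y = e x y.
Proof. by rewrite /add_edge => /negbTE -> /negbTE ->; rewrite !andbF !orbF. Qed.
Lemma addE2 u v x y : x != v -> y != v -> add_edge e u v x y = e x y.
Proof. by rewrite /add_edge => /negbTE -> /negbTE ->; rewrite !andbF !orbF. Qed.
Lemma delE1 u v x y : x != u -> y != u -> del_edge e u v x y = e x y.
Proof. by rewrite /del_edge => /negbTE -> /negbTE ->; rewrite andbF orbF andbT. Qed.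
Lemma delE2 u v x y : x != v -> y != v -> del_edge e u v x y = e x y.
Proof. by rewrite /del_edge => /negbTE -> /negbTE ->; rewrite andbF orbF andbT. Qed.

Lemma cliqueP (r : rel T) (A : {set T}) :
  is_clique r A <-> (forall x y, x \in A -> y \in A -> x != y -> r x y).
Proof.
split.
  move=> H x y xA yA xy.
  by move/forallP: H => /(_ x); rewrite xA /= => /forallP /(_ y); rewrite yA xy.
move=> H; apply/forallP => x; apply/implyP => xA; apply/forallP => y;
  apply/implyP => yA; apply/implyP; exact: H.
Qed.

Lemma indepP (r : rel T) (A : {set T}) :
  is_indep r A <-> (forall x y, x \in A -> y \in A -> ~~ r x y).
Proof.
split.
  move=> H x y xA yA.
  by move/forallP: H => /(_ x); rewrite xA /= => /forallP /(_ y); rewrite yA.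
move=> H; apply/forallP => x; apply/implyP => xA; apply/forallP => y;
  apply/implyP => yA; exact: H.
Qed.

Lemma L1 v b : v != b -> ~~ e v b ->
  exists C : {set T}, [/\ #|C| = s - 2, (forall y, y \in C -> e v y /\ e b y) & rcl e C].
Proof.
move=> vb nvb.
case: (not_rgood (Hadd vb nvb)) => [[A [HA /cliqueP Hc]]|[A [HA /indepP Ai]]]; last first.
  exfalso; apply: (negP (Hg.2 A HA)); apply/indepP => x y xA yA.
  by move: (Ai x y xA yA); apply: contra; rewrite /add_edge => ->.
have vA : v \in A.
  apply: contraT => vA; exfalso; apply: (negP (Hg.1 A HA)); apply/cliqueP.
  move=> x y xA yA xy; have := Hc x y xA yA xy.
  by rewrite addE1 //; [apply: contraNneq vA => <- | apply: contraNneq vA => <-].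
have bA : b \in A.
  apply: contraT => bA; exfalso; apply: (negP (Hg.1 A HA)); apply/cliqueP.
  move=> x y xA yA xy; have := Hc x y xA yA xy.
  by rewrite addE2 //; [apply: contraNneq bA => <- | apply: contraNneq bA => <-].
exists (A :\ v :\ b); split.
- have := cardsD1 v A; have := cardsD1 b (A :\ v).
  rewrite vA !inE bA eq_sym vb /=; lia.
- move=> y; rewrite !inE => /and3P [yb yv yA]; split.
  + have := Hc v y vA yA; rewrite (eq_sym v) yv addE2 // => /(_ isT) //.
  + have := Hc b y bA yA; rewrite (eq_sym b) yb addE1 // 1?eq_sym // => /(_ isT) //.
- move=> x y; rewrite !inE => /and3P [xb xv xA] /and3P [yb yv yA] xy.
  by have := Hc x y xA yA xy; rewrite addE1.
Qed.

Lemma L2 v x : e v x ->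
  exists J : {set T}, [/\ #|J| = t - 2,
     (forall y, y \in J -> [/\ ~~ e v y, ~~ e x y & y != v]) & rcl (fun a b => ~~ e a b) J].
Proof.
move=> vx.
have xv : v != x by apply: contraTneq vx => ->; rewrite irr.
case: (not_rgood (Hdel vx)) => [[A [HA /cliqueP Hc]]|[A [HA /indepP Ai]]].
  exfalso; apply: (negP (Hg.1 A HA)); apply/cliqueP => a b aA bA ab.
  by move: (Hc a b aA bA ab); rewrite /del_edge => /andP [].
have vA : v \in A.
  apply: contraT => vA; exfalso; apply: (negP (Hg.2 A HA)); apply/indepP.
  move=> a b aA bA; have := Ai a b aA bA.
  by rewrite delE1 //; [apply: contraNneq vA => <- | apply: contraNneq vA => <-].
have xA : x \in A.
  apply: contraT => xA; exfalso; apply: (negP (Hg.2 A HA)); apply/indepP.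
  move=> a b aA bA; have := Ai a b aA bA.
  by rewrite delE2 //; [apply: contraNneq xA => <- | apply: contraNneq xA => <-].
exists (A :\ v :\ x); split.
- have := cardsD1 v A; have := cardsD1 x (A :\ v).
  rewrite vA !inE xA eq_sym xv /=; lia.
- move=> y; rewrite !inE => /and3P [yx yv yA]; split => //.
  + by move: (Ai v y vA yA); rewrite (@delE2 v x v y xv yx).
  + have xv' : x != v by rewrite eq_sym.
    by move: (Ai x y xA yA); rewrite (@delE1 v x x y xv' yv).
- move=> a b; rewrite !inE => /and3P [ax av aA] /and3P [bx bv bA] ab.
  by move: (Ai a b aA bA); rewrite (@delE1 v x a b av bv).
Qed.
End Graph.
Section Main.
Variables (T : finType) (e : rel T) (s t : nat).
Hypotheses (hs : 3 <= s) (ht : 3 <= t) (sym : symmetric e) (irr : irreflexive e).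
Hypothesis Hg : rgood e s t.
Hypothesis Hadd : forall u v : T, u != v -> ~~ e u v -> ~ rgood (add_edge e u v) s t.
Hypothesis Hdel : forall u v : T, e u v -> ~ rgood (del_edge e u v) s t.

Lemma degN v u : v != u -> ~~ e v u -> 2 * (s - 2) <= #|[set y | e v y]|.
Proof.
move=> vu nvu.
have L1' := L1 hs ht Hg Hadd; have L2' := L2 hs ht irr Hg Hdel.
have [C0 [HC0 HC0N HC0r]] := L1' v u vu nvu.
apply: (@hajnal T e (s - 2) [set y | e v y] _ C0).
- move=> X XN Xr; rewrite leqNgt; apply/negP => HX.
  have [Y [YX HY]] := @sub_card T (s - 1) X ltac:(lia).
  have vY : v \notin Y.
    by apply/negP => /(subsetP YX) /(subsetP XN); rewrite inE irr.
  have Hcard : #|v |: Y| = s by rewrite cardsU1 vY HY; lia.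
  apply: (negP (Hg.1 (v |: Y) Hcard)).
  apply/(cliqueP _ _) => a b; rewrite !inE => /orP [/eqP->|aY] /orP [/eqP->|bY] ab.
    + by rewrite eqxx in ab.
    + by move: (subsetP XN b (subsetP YX b bY)); rewrite inE.
    + by move: (subsetP XN a (subsetP YX a aY)); rewrite inE sym.
    + exact: Xr (subsetP YX a aY) (subsetP YX b bY) ab.
- split => //; apply/subsetP => y /HC0N [? _]; by rewrite inE.
- move=> x; rewrite inE => vx.
  have [J [HJ HJM _]] := L2' v x vx.
  have : 0 < #|J| by lia.
  case/card_gt0P => b /HJM [nvb nxb bv].
  have [C [HC HCN HCr]] := L1' v b ltac:(by rewrite eq_sym) nvb.
  exists C; split.
    split => //; apply/subsetP => y /HCN [? _]; by rewrite inE.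
  by apply/negP => /HCN [_]; rewrite sym (negbTE nxb).
Qed.

Lemma degM v w : e v w -> 2 * (t - 2) <= #|[set y | (y != v) && ~~ e v y]|.
Proof.
move=> vw.
have L1' := L1 hs ht Hg Hadd; have L2' := L2 hs ht irr Hg Hdel.
have [J0 [HJ0 HJ0M HJ0r]] := L2' v w vw.
apply: (@hajnal T (fun a b => ~~ e a b) (t - 2) [set y | (y != v) && ~~ e v y] _ J0).
- move=> X XN Xr; rewrite leqNgt; apply/negP => HX.
  have [Y [YX HY]] := @sub_card T (t - 1) X ltac:(lia).
  have vY : v \notin Y.
    by apply/negP => /(subsetP YX) /(subsetP XN); rewrite inE eqxx.
  have Hcard : #|v |: Y| = t by rewrite cardsU1 vY HY; lia.
  apply: (negP (Hg.2 (v |: Y) Hcard)).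
  apply/(indepP _ _) => a b; rewrite !inE => /orP [/eqP->|aY] /orP [/eqP->|bY].
    + by rewrite irr.
    + by move: (subsetP XN b (subsetP YX b bY)); rewrite inE => /andP [].
    + by move: (subsetP XN a (subsetP YX a aY)); rewrite inE sym => /andP [].
    + case: (eqVneq a b) => [->|ab]; first by rewrite irr.
      exact: Xr (subsetP YX a aY) (subsetP YX b bY) ab.
- split => //; apply/subsetP => y /HJ0M [? _ ?]; by rewrite inE; apply/andP.
- move=> y; rewrite inE => /andP [yv nvy].
  have [C [HC HCN _]] := L1' v y ltac:(by rewrite eq_sym) nvy.
  have : 0 < #|C| by lia.
  case/card_gt0P => a /HCN [va ya].
  have [J [HJ HJM HJr]] := L2' v a va.
  exists J; split.
    split => //; apply/subsetP => z /HJM [? _ ?]; by rewrite inE; apply/andP.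
  by apply/negP => /HJM [_]; rewrite sym ya.
Qed.
End Main.

Theorem mainTheorem4 (T : finType) (e : rel T) (s t : nat) :
  3 <= s -> 3 <= t -> simple_graph e -> doubly_saturated e s t ->
  2 * s + 2 * t - 7 <= #|T|.
Proof.
move=> hs ht [sym irr] [Hg Hadd Hdel [Hnc Hne]].
have [x [y [xy nxy]]] : exists x y, x != y /\ ~~ e x y.
  apply: NNPP => H; apply: Hnc => a b ab; apply: NNPP => nab; apply: H.
  by exists a, b; split => //; apply/negP.
have [a [b ab]] : exists a b, e a b.
  apply: NNPP => H; apply: Hne => a b; apply/negP => ab; apply: H; by exists a, b.
have [v [u [w [vu nvu vw]]]] : exists v u w, [/\ v != u, ~~ e v u & e v w].
  case: (boolP [exists z, e x z]) => [/existsP [z xz]|].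
    by exists x, y, z.
  rewrite negb_exists => /forallP nx.
  exists a, x, b; split => //.
  - by apply: contraTneq ab => ->; rewrite nx.
  - by rewrite sym nx.
have HN := degN hs ht sym irr Hg Hadd Hdel vu nvu.
have HM := degM hs ht sym irr Hg Hadd Hdel vw.
set N := [set y | e v y] in HN; set M := [set y | (y != v) && ~~ e v y] in HM.
have vM : v \notin M by rewrite inE eqxx.
have E := cardsUI N (v |: M).
have I0 : N :&: (v |: M) = set0.
  apply/setP => z; rewrite !inE.
  case: (eqVneq z v) => [->|zv] /=; first by rewrite irr.
  by case: (e v z).
rewrite I0 cards0 cardsU1 vM addn0 in E.
have := max_card (N :|: (v |: M)); lia.
Qed.
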